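(* Let $X$ be a countably infinite set. The lattice $\mathrm{Cl}_{loc}(X)$ of local clones on $X$ embeds as a partial order into the power set of $\omega$ ordered by inclusion. In particular, $\mathrm{Cl}_{loc}(X)$ contains no uncountable ascending chains and no uncountable descending chains.
   Context: A clone on $X$ is a set of finitary operations $X^n\to X$ ($n\ge1$) containing all projections $\pi^n_k(x_1,\dots,x_n)=x_k$ and closed under composition. Giving $X$ the discrete topology and $X^{X^n}$ the product topology, a clone is local if for each $n$ its set of $n$-ary operations is closed in $X^{X^n}$; equivalently, an $n$-ary operation $g$ belongs to the clone whenever for every finite $B\subseteq X^n$ some $n$-ary operation of the clone agrees with $g$ on $B$. $\mathrm{Cl}_{loc}(X)$ is the complete lattice of local clones on $X$ ordered by inclusion. An order embedding is a map $e$ with $a\le b\iff e(a)\le e(b)$. *)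

(* Defs.v *)
From Stdlib Require List.
From mathcomp Require Import all_boot.

Set Implicit Arguments.
Unset Strict Implicit.
Unset Printing Implicit Defensive.

(* An (n+1)-ary operation on X (arities n >= 1 are encoded as n.+1). *)
Definition op (X : Type) (n : nat) : Type := ('I_n.+1 -> X) -> X.

Definition opfam (X : Type) : Type := forall n : nat, op X n -> Prop.

Definition proj (X : Type) (n : nat) (k : 'I_n.+1) : op X n := fun x => x k.

Definition compose (X : Type) (m n : nat) (f : op X m) (g : 'I_m.+1 -> op X n)
  : op X n := fun x => f (fun i => g i x).

Definition is_clone (X : Type) (C : opfam X) : Prop :=
  (forall n (k : 'I_n.+1), C n (proj k)) /\
  (forall m n (f : op X m) (g : 'I_m.+1 -> op X n),
      C m f -> (forall i, C n (g i)) -> C n (compose f g)).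

Definition is_local (X : Type) (C : opfam X) : Prop :=
  forall n (g : op X n),
    (forall B : list ('I_n.+1 -> X),
        exists f, C n f /\ (forall b, List.In b B -> f b = g b)) ->
    C n g.

Record local_clone (X : Type) := LocalClone {
  lc_ops :> opfam X;
  lc_clone : is_clone lc_ops;
  lc_local : is_local lc_ops }.

Definition lc_le (X : Type) (A B : local_clone X) : Prop :=
  forall n f, @lc_ops X A n f -> @lc_ops X B n f.

Definition countably_infinite (X : Type) : Prop :=
  exists (f : nat -> X) (g : X -> nat),
    (forall k, g (f k) = k) /\ (forall x, f (g x) = x).

Definition order_embedding_into_powerset_omega (X : Type)
  (e : local_clone X -> (nat -> Prop)) : Prop :=
  forall A B : local_clone X, lc_le A B <-> (forall k, e A k -> e B k).

Definition is_chain (X : Type) (S : local_clone X -> Prop) : Prop :=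
  forall A B, S A -> S B -> lc_le A B \/ lc_le B A.

(* ascending chain: a chain well-ordered by ⊆ (every nonempty subfamily has a least element) *)
Definition ascending_chain (X : Type) (S : local_clone X -> Prop) : Prop :=
  is_chain S /\
  forall T : local_clone X -> Prop, (forall A, T A -> S A) -> (exists A, T A) ->
    exists A, T A /\ forall B, T B -> lc_le A B.

(* descending chain: a chain well-ordered by ⊇ *)
Definition descending_chain (X : Type) (S : local_clone X -> Prop) : Prop :=
  is_chain S /\
  forall T : local_clone X -> Prop, (forall A, T A -> S A) -> (exists A, T A) ->
    exists A, T A /\ forall B, T B -> lc_le B A.

(* S is countable: injects into nat (elements identified when they are equal clones,
   i.e. mutually included) *)
Definition countable_family (X : Type) (S : local_clone X -> Prop) : Prop :=
  exists c : local_clone X -> nat,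
    forall A B, S A -> S B -> c A = c B -> lc_le A B /\ lc_le B A.

(* Main.v *)
Require Import Defs.
From mathcomp Require Import all_boot.
From Stdlib Require Import Classical ClassicalEpsilon FunctionalExtensionality.

Section Gen.
Variables (T : Type) (le : T -> T -> Prop) (e : T -> nat -> Prop).
Hypothesis He : forall A B, le A B <-> (forall k, e A k -> e B k).

Lemma gen_count (S : T -> Prop) :
  (forall A B, S A -> S B -> le A B \/ le B A) ->
  (forall U : T -> Prop, (forall A, U A -> S A) -> (exists A, U A) ->
     exists A, U A /\ forall B, U B -> le A B) ->
  exists c : T -> nat, forall A B, S A -> S B -> c A = c B -> le A B /\ le B A.
Proof.
move=> chain wf.
pose Q A k := exists A', S A' /\ ~ le A' A /\ (forall B, S B -> ~ le B A -> le A' B)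
                /\ e A' k /\ ~ e A k.
pose c A := match excluded_middle_informative (exists k, Q A k) with
            | left h => (proj1_sig (constructive_indefinite_description _ h)).+1
            | right _ => 0 end.
exists c.
have key : forall A B, S A -> S B -> c A = c B -> le A B -> le B A.
  move=> A B SA SB cAB leAB; apply NNPP => nBA.
  have [A' [[SA' nA'A] minA']] : exists A', (S A' /\ ~ le A' A) /\
      forall B', (S B' /\ ~ le B' A) -> le A' B'.
    apply: (wf (fun B' => S B' /\ ~ le B' A)).
      by move=> ? [].
    by exists B.
  have [k [ek nek]] : exists k, e A' k /\ ~ e A k.
    apply NNPP => hn; apply: nA'A; apply/He => k ek.
    by apply NNPP => nk; apply: hn; exists k.
  have hQ : exists k, Q A k.
    exists k; rewrite /Q; exists A'; split => //; split => //; split => //.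
    by move=> B0 SB0 nB0; apply: minA'.
  move: cAB; rewrite /c.
  case: (excluded_middle_informative (exists k, Q A k)) => [h|//].
  case: (constructive_indefinite_description _ h) => kA [A1 [SA1 [nA1 [min1 [e1 ne1]]]]] /=.
  have leA1B : le A1 B by apply: min1.
  have eBk : e B kA by move/He: leA1B; apply.
  case: (excluded_middle_informative (exists k, Q B k)) => [h'|//].
  case: (constructive_indefinite_description _ h') => kB [B1 [_ [_ [_ [_ nB]]]]] /= [hk].
  by apply: nB; rewrite -hk.
move=> A B SA SB cAB; case: (chain A B SA SB) => h.
  by split => //; apply: key.
by split => //; apply: key.
Qed.
End Gen.

Theorem proposition2p6 (X : Type) (hX : countably_infinite X) :
  (exists e : local_clone X -> (nat -> Prop),
      order_embedding_into_powerset_omega e) /\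
  (forall S : local_clone X -> Prop, ascending_chain S -> countable_family S) /\
  (forall S : local_clone X -> Prop, descending_chain S -> countable_family S).
Proof.
case: hX => fX [gX [hfg hgf]].
pose dec n (l : seq nat) : 'I_n.+1 -> X := fun i => fX (nth 0 l i).
pose P (C : local_clone X) (t : (nat * seq (seq nat * nat))%type) :=
  exists h, @lc_ops X C t.1 h /\ forall p, List.In p t.2 -> h (dec t.1 p.1) = fX p.2.
pose e C k := match unpickle k with Some t => P C t | None => False end.
have He : order_embedding_into_powerset_omega e.
  move=> A B; split.
    move=> AB k; rewrite /e; case: (unpickle k) => // t [h [Ah Hh]].
    by exists h; split => //; apply: AB.
  move=> H n f Af; apply: lc_local => Bs.
  pose code (b : 'I_n.+1 -> X) := [seq gX (b i) | i <- enum 'I_n.+1].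
  have dc : forall b, dec n (code b) = b.
    move=> b; apply: functional_extensionality => i.
    rewrite /dec /code (nth_map i) ?size_enum_ord // nth_ord_enum hgf //.
  pose L := map (fun b => (code b, gX (f b))) Bs.
  have := H (pickle (n, L)); rewrite /e pickleK.
  case.
    exists f; split => //= p /List.in_map_iff [b [<- _]] /=.
    by rewrite dc hgf.
  move=> h [Bh Hh]; exists h; split => // b bB.
  have := Hh (code b, gX (f b)); rewrite /= dc hgf; apply.
  by apply/List.in_map_iff; exists b.
split; first by exists e.
split.
  move=> S [ch wf]; exact: (@gen_count _ _ _ He S ch wf).
move=> S [ch wf].
pose e' C k := ~ e C k.
have He' : forall A B, (lc_le B A) <-> (forall k, e' A k -> e' B k).
  move=> A B; rewrite He; split.
    by move=> h k nA eB; apply: nA; apply: h.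
  move=> h k eB; apply NNPP => nA; exact: (h k nA eB).
have [c Hc] := @gen_count _ _ _ He' S (fun A B SA SB => proj1 (or_comm _ _) (ch A B SA SB)) wf.
exists c => A B SA SB cAB; have [h1 h2] := Hc A B SA SB cAB; by split.
Qed.
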